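(* Fix $K$ and $K_T$ with $0<K_T<K$. Among all partitions $\mathcal{C}$ of $[N]$ into $K$ equally sized clusters, the set of maximizers of $\operatorname{Tr}\big(\operatorname{Var}_{\mathbf{Z}\sim\mathcal{D}(\mathcal{C})}(\mathbf{d})\big)$ equals the set of minimizers of $$\sum_{i\in[N]}\sum_{j\notin\mathcal{C}(i)}\sum_{s\in[M]}\frac{w_{is}}{\sum_{k}w_{ks}}\,\frac{w_{js}}{\sum_{k}w_{ks}},$$ where $\mathbf{d}=(d_1,\dots,d_M)$ and $\operatorname{Var}(\mathbf{d})$ is its covariance matrix.
   Context: Setting: $N$ experimental units $[N]$, $M$ interference units $[M]$, weights $w_{is}\ge0$ with $\sum_i w_{is}>0$ for all $s$. For $\mathbf{Z}\in\{-1,1\}^N$: dose $d_s=\frac{\sum_i w_{is}Z_i}{\sum_i w_{is}}$. Balanced $K$-cluster randomized design $\mathcal{D}(\mathcal{C})$: $K\ge2$ divides $N$, $\mathcal{C}$ partitions $[N]$ into $K$ clusters of size $N/K$, $\mathcal{C}(i)$ is the cluster of $i$; $K_T$ clusters chosen uniformly at random are treated ($Z_i=1$), the rest are control ($Z_i=-1$). *)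

(* Defs.v *)
From mathcomp Require Import all_boot all_order all_algebra.
Set Implicit Arguments. Unset Strict Implicit. Unset Printing Implicit Defensive.
Import Order.TTheory GRing.Theory Num.Theory.
Local Open Scope ring_scope.

Section Cluster.
Variables (R : realFieldType) (N M : nat).
Variable w : 'I_N -> 'I_M -> R.

Definition wsum (s : 'I_M) : R := \sum_(k < N) w k s.

Definition balanced_partition (K : nat) (P : {set {set 'I_N}}) : bool :=
  [&& partition P [set: 'I_N], #|P| == K & [forall B in P, #|B| == (N %/ K)%N]].

Definition assign (P : {set {set 'I_N}}) (T : {set {set 'I_N}}) (i : 'I_N) : R :=
  if pblock P i \in T then 1 else -1.

Definition dose P T (s : 'I_M) : R :=
  (\sum_(i < N) w i s * assign P T i) / wsum s.

(* support of the design D(C): all choices of K_T treated clusters, uniform *)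
Definition designs (P : {set {set 'I_N}}) (KT : nat) : {set {set {set 'I_N}}} :=
  [set T in powerset P | #|T| == KT].

Definition expect P KT (f : {set {set 'I_N}} -> R) : R :=
  (\sum_(T in designs P KT) f T) / #|designs P KT|%:R.

Definition var_dose P KT (s : 'I_M) : R :=
  expect P KT (fun T => dose P T s ^+ 2) - (expect P KT (fun T => dose P T s)) ^+ 2.

Definition trace_var P KT : R := \sum_(s < M) var_dose P KT s.

Definition cross_obj (P : {set {set 'I_N}}) : R :=
  \sum_(i < N) \sum_(j < N | j \notin pblock P i) \sum_(s < M)
     (w i s / wsum s) * (w j s / wsum s).

End Cluster.

(* Main.v *)
Require Import Defs.
From mathcomp Require Import all_boot all_order all_algebra ring zify.
Import Order.TTheory GRing.Theory Num.Theory.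
Local Open Scope ring_scope.

Section Pf.
Variables (R : realFieldType) (N M : nat) (w : 'I_N -> 'I_M -> R).
Hypothesis hws : forall s, 0 < wsum w s.

Definition a i s := w i s / wsum w s.

Lemma sum_a s : \sum_(i < N) a i s = 1.
Proof. rewrite /a -mulr_suml -/(wsum w s) divff //. exact: lt0r_neq0. Qed.

Definition U P (T : {set {set 'I_N}}) s := \sum_(i < N) a i s * (pblock P i \notin T)%:R.

Lemma dose_eq P T s : dose w P T s = 1 - 2 * U P T s.
Proof.
rewrite /dose /U mulr_suml.
transitivity (\sum_(i < N) (a i s - 2 * (a i s * (pblock P i \notin T)%:R))).
  apply: eq_bigr => i _; rewrite /assign /a; case: (_ \in T) => /=; ring.
by rewrite sumrB sum_a -mulr_sumr.
Qed.

Lemma count_out (P : {set {set 'I_N}}) (KT : nat) (B1 B2 : {set 'I_N}) : B1 \in P -> B2 \in P ->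
  #|[set T in designs P KT | (B1 \notin T) && (B2 \notin T)]| = 'C(#|P| - (B1 != B2).+1, KT).
Proof.
move=> h1 h2.
have hS : [set B1; B2] \subset P by apply/subsetP => B; rewrite !inE => /orP[] /eqP ->.
rewrite -cards2 -(setIidPr hS) -cardsD -cards_draws.
apply: eq_card => T; rewrite !inE.
rewrite subsetD disjoint_sym (@eq_disjoint _ _ (predU1 B1 (pred1 B2))); last by move=> x; rewrite !inE.
rewrite disjointU1 disjoint1.
case: (T \subset P); case: (_ == KT); case: (B1 \in T); case: (B2 \in T) => //=.
Qed.

Lemma sum_out (P : {set {set 'I_N}}) KT (B1 B2 : {set 'I_N}) : B1 \in P -> B2 \in P ->
  \sum_(T in designs P KT) ((B1 \notin T)%:R * (B2 \notin T)%:R : R)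
  = ('C(#|P| - (B1 != B2).+1, KT))%:R.
Proof.
move=> h1 h2; rewrite -(@count_out P KT B1 B2 h1 h2) -sum1_card natr_sum.
rewrite big_mkcond [RHS]big_mkcond /=; apply: eq_bigr => T _.
rewrite [in RHS]inE; case: (T \in designs P KT); case: (B1 \in T); case: (B2 \in T) => /=;
  rewrite ?mulr1 ?mulr0 ?mul0r //.
Qed.

Lemma card_designs (P : {set {set 'I_N}}) KT : #|designs P KT| = 'C(#|P|, KT).
Proof.
rewrite -cards_draws; apply: eq_card => T; by rewrite !inE.
Qed.

Section Part.
Variables (P : {set {set 'I_N}}) (KT : nat).
Hypothesis hpart : partition P [set: 'I_N].

Lemma pb_mem i : pblock P i \in P.
Proof.
apply: pblock_mem; move/and3P: hpart => [/eqP -> _ _]; by rewrite inE.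
Qed.

Lemma pb_eq i j : (pblock P i != pblock P j) = (j \notin pblock P i).
Proof.
move/and3P: hpart => [/eqP hc ht _]; rewrite eq_pblock //; by rewrite hc inE.
Qed.

Definition b1 := ('C(#|P| - 1, KT))%:R : R.
Definition b2 := ('C(#|P| - 2, KT))%:R : R.
Definition xs s := \sum_(i < N) \sum_(j < N | j \notin pblock P i) a i s * a j s.

Lemma sumU s : \sum_(T in designs P KT) U P T s = b1.
Proof.
rewrite /U exchange_big /=.
transitivity (\sum_(i < N) a i s * b1).
  apply: eq_bigr => i _; rewrite -mulr_sumr; congr (_ * _).
  have hb := pb_mem i.
  rewrite /b1 (_ : (#|P| - 1 = #|P| - (pblock P i != pblock P i).+1)%N); last by rewrite eqxx.
  rewrite -(@sum_out P KT _ _ hb hb); apply: eq_bigr => T _.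
  by case: (_ \in T); rewrite /= ?mulr1 ?mulr0.
by rewrite -mulr_suml sum_a mul1r.
Qed.

Lemma sumU2 s : \sum_(T in designs P KT) U P T s ^+ 2 = b1 - (b1 - b2) * xs s.
Proof.
have e T : U P T s ^+ 2 = \sum_(i < N) \sum_(j < N)
    (a i s * a j s) * ((pblock P i \notin T)%:R * (pblock P j \notin T)%:R).
  rewrite expr2 /U mulr_suml; apply: eq_bigr => i _; rewrite mulr_sumr.
  apply: eq_bigr => j _; ring.
rewrite (eq_bigr _ (fun T _ => e T)) exchange_big /=.
transitivity (\sum_(i < N) \sum_(j < N) (b1 * (a i s * a j s) -
    (b1 - b2) * (if j \notin pblock P i then a i s * a j s else 0))).
  apply: eq_bigr => i _; rewrite exchange_big /=; apply: eq_bigr => j _.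
  rewrite -mulr_sumr (@sum_out P KT _ _ (pb_mem i) (pb_mem j)) pb_eq /b1 /b2.
  by case: (j \in pblock P i) => /=; ring.
under eq_bigr do rewrite sumrB.
rewrite sumrB.
under eq_bigr do rewrite -mulr_sumr.
under [X in _ - X]eq_bigr do rewrite -mulr_sumr.
rewrite -!mulr_sumr.
have -> : \sum_(i < N) \sum_(j < N) a i s * a j s = 1.
  transitivity (\sum_(i < N) a i s * \sum_(j < N) a j s).
    by apply: eq_bigr => i _; rewrite mulr_sumr.
  by rewrite sum_a -mulr_suml sum_a mulr1.
rewrite mulr1 /xs; congr (_ - _ * _); apply: eq_bigr => i _; by rewrite [RHS]big_mkcond.
Qed.

Hypothesis hKT : (KT <= #|P|)%N.
Definition nn := ('C(#|P|, KT))%:R : R.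

Lemma var_eq s : var_dose w P KT s =
  (1 - ((nn - 2 * b1) / nn) ^+ 2) - 4 * (b1 - b2) / nn * xs s.
Proof.
have hn : nn != 0 by rewrite /nn pnatr_eq0 -lt0n bin_gt0.
rewrite /var_dose /expect card_designs -/nn.
under eq_bigr do rewrite dose_eq.
under [X in _ - (X / _) ^+ 2]eq_bigr do rewrite dose_eq.
have e1 T : (1 - 2 * U P T s) ^+ 2 = 1 + ((-4) * U P T s + 4 * U P T s ^+ 2) by ring.
have e2 T : (1 - 2 * U P T s) = 1 + (-2) * U P T s by ring.
under eq_bigr do rewrite e1.
under [X in _ - (X / _) ^+ 2]eq_bigr do rewrite e2.
rewrite !big_split /= -!mulr_sumr sumU sumU2 sumr_const card_designs -/nn.
by field.
Qed.

Lemma cross_eq : cross_obj w P = \sum_(s < M) xs s.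
Proof.
rewrite /cross_obj /xs.
under eq_bigr do rewrite exchange_big /=.
by rewrite exchange_big.
Qed.

Lemma trace_eq : trace_var w P KT =
  M%:R * (1 - ((nn - 2 * b1) / nn) ^+ 2) - 4 * (b1 - b2) / nn * cross_obj w P.
Proof.
rewrite /trace_var cross_eq; under eq_bigr do rewrite var_eq.
by rewrite sumrB sumr_const card_ord -mulr_sumr [in RHS]mulr_natl.
Qed.

End Part.

End Pf.

Theorem mainTheorem8 (R : realFieldType) (N M K KT : nat)
  (w : 'I_N -> 'I_M -> R)
  (hw0 : forall i s, 0 <= w i s)
  (hws : forall s, 0 < wsum w s)
  (hK : (2 <= K)%N) (hKN : (K %| N)%N)
  (hKT0 : (0 < KT)%N) (hKTK : (KT < K)%N)
  (P : {set {set 'I_N}}) (hP : balanced_partition K P) :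
  (forall P' : {set {set 'I_N}}, balanced_partition K P' ->
      trace_var w P' KT <= trace_var w P KT)
  <->
  (forall P' : {set {set 'I_N}}, balanced_partition K P' ->
      cross_obj w P <= cross_obj w P').
Proof.
have key P' : balanced_partition K P' -> trace_var w P' KT =
   M%:R * (1 - ((('C(K, KT))%:R - 2 * ('C(K - 1, KT))%:R) / ('C(K, KT))%:R) ^+ 2)
   - 4 * (('C(K - 1, KT))%:R - ('C(K - 2, KT))%:R) / ('C(K, KT))%:R * cross_obj w P'.
  case/and3P => hp' /eqP hc' _.
  have hk : (KT <= #|P'|)%N by rewrite hc' ltnW.
  by rewrite (@trace_eq R N M w hws P' KT hp' hk) /nn /b1 /b2 hc'.
have hc1 : 0 < 4 * (('C(K - 1, KT))%:R - ('C(K - 2, KT))%:R) / (('C(K, KT))%:R : R).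
  apply: divr_gt0; last by rewrite ltr0n bin_gt0 ltnW.
  apply: mulr_gt0 => //; rewrite subr_gt0 ltr_nat.
  have -> : (K - 1 = (K - 2).+1)%N.
    by clear -hK; lia.
  clear -hK hKT0 hKTK; case: KT hKT0 hKTK => // k _ hk.
  rewrite binS -[X in (X < _)%N]addn0 ltn_add2l bin_gt0; lia.
split => H P' hP'; have := H P' hP'; rewrite !key //.
  by rewrite lerD2l lerN2 ler_pM2l.
by move=> h; rewrite lerD2l lerN2 ler_pM2l.
Qed.
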